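(* For $\tau=\tau_F$ one has $\widehat\tau_{\mathbf 0}=1$, and $\widehat\tau_{\mathbf n}=0$ for every $\mathbf n\in\mathbb N_0^d\setminus\{\mathbf 0\}$ that lies in none of the blocks $B_{2m_s}$, $s\in\mathbb N$. The same holds for the coefficients $\widehat{\tau^{\boldsymbol\pi}}_{\mathbf n}$ of $\tau^{\boldsymbol\pi}=\tau_{F^{\boldsymbol\pi}}$ for every sequence $\boldsymbol\pi=(\boldsymbol\pi_s)_{s\in\mathbb N}$ of permutations $\boldsymbol\pi_s$ of $\{0,\dots,2^{m_s}-1\}^d$.
   Context: Fix $d\ge2$. $\mathbb G$ is the dyadic group: sequences $g=(g_k)_{k\ge0}$, $g_k\in\{0,1\}$, coordinatewise addition mod 2, product topology; $\mathbb G^d$ its $d$-th power. For $n\in\mathbb N_0$, $n=\sum_kn_k2^k$, $n_k\in\{0,1\}$. Dyadic interval of rank $k$: $\Delta^{(k)}_m=\{g: g_t=m_{k-1-t},\ 0\le t<k\}$; dyadic cube $\Delta^{(k)}_{\mathbf m}=\prod_l\Delta^{(k)}_{m^l}$. Vector order coordinatewise, $\mathbf 0,\mathbf 1$ constant vectors; $B_k=\{\mathbf n\in\mathbb N_0^d: 2^k\mathbf 1\le\mathbf n<2^{k+1}\mathbf 1\}$. Walsh functions $W_n(g)=\prod_k(-1)^{g_kn_k}$, $W_{\mathbf n}(\mathbf g)=\prod_lW_{n^l}(g^l)$; $W^{(k)}_{\mathbf n\mathbf m}$ is the constant value of $W_{\mathbf n}$ on $\Delta^{(k)}_{\mathbf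 m}$ ($\mathbf n,\mathbf m<2^k\mathbf 1$); $R_{k\mathbf 1}:=W_{2^k\mathbf 1}$. Quasimeasure: $\tau$ on dyadic cubes with $\tau(\Delta^{(k)}_{\mathbf m})=\sum_{\boldsymbol\sigma\in\{0,1\}^d}\tau(\Delta^{(k+1)}_{2\mathbf m+\boldsymbol\sigma})$; $\widehat\tau_{\mathbf n}=\sum_{\mathbf m<2^k\mathbf 1}W^{(k)}_{\mathbf n\mathbf m}\tau(\Delta^{(k)}_{\mathbf m})$ for $\mathbf n<2^k\mathbf 1$. For nonempty closed $E$, $\tau_E$ is the unique nonnegative quasimeasure with $\tau_E(\mathbb G^d)=1$, $\tau_E(\Delta)=0$ iff $\Delta\cap E=\emptyset$, splitting the value of a cube meeting $E$ equally among its $2^d$ children that meet $E$. Let $m_1=0$, $m_{s+1}=2(2m_s+1)$. $F_s=\bigcup_{\mathbf m,\mathbf m'<2^{m_s}\mathbf 1}\{\mathbf g\in\Delta^{(2m_s)}_{2^{m_s}\mathbf m+\mathbf m'}: R_{2m_s\mathbf 1}(\mathbf g)=W^{(m_s)}_{\mathbf m\mathbf m'}\}$, $F=\bigcap_sF_s$; $F^{\boldsymbol\pi}_s$ is defined the same way with $W^{(m_s)}_{\boldsymbol\pi_s(\mathbf m)\,\mathbf m'}$ in place of $W^{(m_s)}_{\mathbf m\mathbf m'}$, and $F^{\boldsymbol\pi}=\bigcap_sF^{\boldsymbol\pi}_s$. *)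

(* Defs.v *)
From HB Require Import structures.
From mathcomp Require Import all_boot all_order all_algebra all_fingroup.
From mathcomp Require Import boolp.
Set Implicit Arguments. Unset Strict Implicit. Unset Printing Implicit Defensive.
Import GRing.Theory Num.Theory.
Local Open Scope ring_scope.

(* The dyadic group G: sequences g = (g_k)_{k>=0} of bits. A point of G^d is
   a vector of d such sequences, x : 'I_d -> G. *)
Definition G := nat -> bool.

Definition bit (n j : nat) : bool := odd (n %/ 2 ^ j).

(* Walsh function W_n(g) = prod_k (-1)^(g_k n_k); only digits j < n can be
   nonzero (n < 2^n), so the product is over j < n. *)
Definition W (n : nat) (g : G) : rat :=
  (-1) ^+ (\sum_(j < n) (g j && bit n j))%N.

Definition Wd (d : nat) (n : 'I_d -> nat) (x : 'I_d -> G) : rat :=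
  \prod_(l < d) W (n l) (x l).

Definition cube (d k : nat) (m : 'I_d -> nat) (x : 'I_d -> G) : Prop :=
  forall (l : 'I_d) (t : nat), (t < k)%N -> x l t = bit (m l) (k - 1 - t).

Definition cube_pt (d k : nat) (m : 'I_d -> nat) : 'I_d -> G :=
  fun l t => (t < k)%N && bit (m l) (k - 1 - t).

(* W^(k)_{n m}: the (constant) value of W_n on Delta^(k)_m (n, m < 2^k 1). *)
Definition Wk (d k : nat) (n m : 'I_d -> nat) : rat := Wd n (cube_pt k m).

Definition Rk (d k : nat) (x : 'I_d -> G) : rat := Wd (fun _ => 2 ^ k)%N x.

Definition meets (d : nat) (E : ('I_d -> G) -> Prop) (k : nat) (m : 'I_d -> nat) : Prop :=
  exists x, E x /\ cube k m x.

(* tau_E (Delta^(k)_m), given recursively: the whole space (rank 0) gets 1;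
   a cube of rank k+1 that meets E gets the value of its parent
   Delta^(k)_{floor(m/2)} divided by the number of children
   Delta^(k+1)_{2 floor(m/2) + sigma}, sigma in {0,1}^d, of that parent which
   meet E; a cube not meeting E gets 0. *)
Fixpoint tauE (d : nat) (E : ('I_d -> G) -> Prop) (k : nat) : ('I_d -> nat) -> rat :=
  match k with
  | 0 => fun m => if `[< meets E 0 m >] then 1 else 0
  | k'.+1 => fun m =>
      if `[< meets E k'.+1 m >] then
        tauE E k' (fun l => (m l)./2) /
        (#|[pred sigma : {ffun 'I_d -> bool} |
             `[< meets E k'.+1 (fun l => ((m l)./2).*2 + sigma l)%N >] ]|)%:R
      else 0
  end.

(* Fourier-Walsh coefficient computed at level k (for n < 2^k 1):
   sum_{m < 2^k 1} W^(k)_{n m} tau(Delta^(k)_m). *)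
Definition fcoef (d : nat) (tau : nat -> ('I_d -> nat) -> rat) (k : nat)
  (n : 'I_d -> nat) : rat :=
  \sum_(m : {ffun 'I_d -> 'I_(2 ^ k)})
     Wk k n (fun l => nat_of_ord (m l)) * tau k (fun l => nat_of_ord (m l)).

(* m_1 = 0, m_{s+1} = 2 (2 m_s + 1); index s >= 1 (value at 0 is a dummy). *)
Fixpoint ms (s : nat) : nat :=
  match s with
  | 0 | 1 => 0
  | s'.+1 => (2 * (2 * ms s' + 1))%N
  end.

Definition inB (d k : nat) (n : 'I_d -> nat) : Prop :=
  forall l : 'I_d, (2 ^ k <= n l < 2 ^ k.+1)%N.

(* Generic F_s with an index map p_s applied to the first index m:
   F_s = U_{m,m' < 2^{m_s} 1} { x in Delta^(2 m_s)_{2^{m_s} m + m'} :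
                                R_{2 m_s 1}(x) = W^(m_s)_{p_s(m) m'} },
   and the set is the intersection over s >= 1. *)
Definition Fgen (d : nat)
  (p : forall s, {ffun 'I_d -> 'I_(2 ^ ms s)} -> {ffun 'I_d -> 'I_(2 ^ ms s)})
  (x : 'I_d -> G) : Prop :=
  forall s, (1 <= s)%N ->
    exists m m' : {ffun 'I_d -> 'I_(2 ^ ms s)},
      cube (2 * ms s) (fun l => 2 ^ ms s * m l + m' l)%N x /\
      Rk (2 * ms s) x = Wk (ms s) (fun l => nat_of_ord (p s m l))
                                   (fun l => nat_of_ord (m' l)).

Definition Fset (d : nat) : ('I_d -> G) -> Prop := @Fgen d (fun s m => m).

Definition Fpi (d : nat) (pi : forall s, {perm {ffun 'I_d -> 'I_(2 ^ ms s)}}) :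
  ('I_d -> G) -> Prop := @Fgen d (fun s => pi s).

(* Main.v *)
Require Import Defs.
From HB Require Import structures.
From mathcomp Require Import all_boot all_order all_algebra all_fingroup.
From mathcomp Require Import boolp.
From mathcomp Require Import zify lra.
Set Implicit Arguments. Unset Strict Implicit. Unset Printing Implicit Defensive.
Import GRing.Theory Num.Theory.
Local Open Scope ring_scope.

Lemma bit0 (a : nat) (b : bool) : bit (a.*2 + b) 0 = b.
Proof. by rewrite /bit expn0 divn1 oddD odd_double; case: b. Qed.

Lemma bitS (a : nat) (b : bool) j : bit (a.*2 + b) j.+1 = bit a j.
Proof.
by rewrite /bit expnS divnMA divn2 addnC half_bit_double.
Qed.

Lemma bit_small n j : (n < 2 ^ j)%N -> bit n j = false.
Proof. by move=> h; rewrite /bit divn_small. Qed.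

Lemma bit_top n k : (2 ^ k <= n < 2 ^ k.+1)%N -> bit n k = true.
Proof.
move=> /andP[h1 h2]; rewrite /bit.
have a1 : (n %/ 2 ^ k < 2)%N by rewrite ltn_divLR ?expn_gt0 // mulnC -expnSr.
have a2 : (0 < n %/ 2 ^ k)%N by rewrite divn_gt0 ?expn_gt0.
have -> : (n %/ 2 ^ k = 1)%N by lia.
by [].
Qed.

Lemma bits_eq K : forall a b : nat, (a < 2 ^ K)%N -> (b < 2 ^ K)%N ->
  (forall j, (j < K)%N -> bit a j = bit b j) -> a = b.
Proof.
elim: K => [|K IH] a b ha hb h.
  by move: ha hb; rewrite expn0; clear h; case: a; case: b.
have e0 : odd a = odd b.
  by have := h 0%N erefl; rewrite /bit expn0 !divn1.
rewrite -[a]odd_double_half -[b]odd_double_half e0 (IH a./2 b./2) //.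
- by rewrite -divn2 ltn_divLR // -expnSr.
- by rewrite -divn2 ltn_divLR // -expnSr.
move=> j hj.
have := h j.+1 hj.
by rewrite -{1}(odd_double_half a) -{1}(odd_double_half b) !(addnC (odd _)) !bitS.
Qed.

Lemma W_range n g N : (n <= N)%N ->
  W n g = (-1) ^+ (\sum_(j < N) (g j && bit n j))%N.
Proof.
move=> hN; rewrite /W.
rewrite -(subnKC hN) big_split_ord /=.
rewrite [X in (_ + X)%N]big1 ?addn0 //.
move=> j _; rewrite bit_small ?andbF //.
apply: (leq_trans (ltn_expl n (isT : (1 < 2)%N))).
by rewrite leq_exp2l // leq_addr.
Qed.

Lemma W_ext n g g' : (forall j, bit n j -> g j = g' j) -> W n g = W n g'.
Proof.
move=> h; rewrite /W; congr (_ ^+ _); apply: eq_bigr => j _.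
by case hb: (bit n j); rewrite ?andbF ?andbT // h.
Qed.

Lemma bit_pow2 k j : bit (2 ^ k) j = (j == k).
Proof.
rewrite /bit; case: (ltngtP j k) => h.
- rewrite -(subnK (ltnW h)) expnD mulnK ?expn_gt0 //.
  rewrite -(subnSK h) expnS oddM /= ?andbF //.
- by rewrite divn_small // ltn_exp2l.
- by rewrite h divnn expn_gt0.
Qed.

Lemma W_pow2 k g : W (2 ^ k) g = (-1) ^+ (g k).
Proof.
rewrite /W (bigD1 (Ordinal (ltn_expl k (isT : (1 < 2)%N)))) //=.
rewrite big1 ?addn0; last first.
  move=> j /eqP hj; rewrite bit_pow2.
  case: eqP => [e|]; last by rewrite andbF.
  by exfalso; apply: hj; apply: val_inj.
by rewrite bit_pow2 eqxx andbT.
Qed.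

Lemma Rk_bit d k (x : 'I_d -> G) : Rk k x = \prod_(l < d) (-1) ^+ (x l k).
Proof. by rewrite /Rk /Wd; apply: eq_bigr => l _; rewrite W_pow2. Qed.

Lemma sign_pm (b : nat) : ((-1) ^+ b == 1 :> rat) || ((-1) ^+ b == -1 :> rat).
Proof. by rewrite -(signr_odd rat); case: (odd b); rewrite ?expr0 ?expr1 eqxx ?orbT. Qed.

Lemma Wd_pm d n (x : 'I_d -> G) : (Wd n x == 1) || (Wd n x == -1).
Proof.
rewrite /Wd; apply: (big_ind (fun y : rat => (y == 1) || (y == -1))).
- by rewrite eqxx.
- move=> a b /orP[] /eqP -> /orP[] /eqP ->; 
  by rewrite ?mulr1 ?mul1r ?mulrNN ?mulr1 ?eqxx ?orbT.
- by move=> l _; apply: sign_pm.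
Qed.

Lemma cube_childP d k (q : 'I_d -> nat) (sg : 'I_d -> bool) (x : 'I_d -> G) :
  cube k.+1 (fun l => (q l).*2 + sg l)%N x <-> cube k q x /\ (forall l, x l k = sg l).
Proof.
split.
- move=> h; split.
  + move=> l t ht; rewrite (h l t (ltnW ht)).
    have -> : (k.+1 - 1 - t = (k - 1 - t).+1)%N by lia.
    by rewrite bitS.
  + move=> l; rewrite (h l k (ltnSn k)).
    by rewrite subn1 /= subnn bit0.
- move=> [h1 h2] l t ht.
  have [htk|htk] := ltnP t k.
    rewrite h1 //.
    have -> : (k.+1 - 1 - t = (k - 1 - t).+1)%N by lia.
    by rewrite bitS.
  have -> : t = k by lia.
  by rewrite h2 subn1 /= subnn bit0.
Qed.

Fixpoint num (k : nat) (g : G) : nat :=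
  match k with 0 => 0%N | k'.+1 => ((num k' g).*2 + g k')%N end.

Lemma num_lt k g : (num k g < 2 ^ k)%N.
Proof.
elim: k => [|k IH] //=; rewrite expnS; case: (g k) => /=; lia.
Qed.

Lemma cube_num d k (x : 'I_d -> G) : cube k (fun l => num k (x l)) x.
Proof.
elim: k => [|k IH]; first by move=> l t.
have H := proj2 (cube_childP k (fun l => num k (x l)) (fun l => x l k) x). exact: H.
Qed.

Lemma cube_ext d k N (x y : 'I_d -> G) : cube k N x ->
  (forall l t, (t < k)%N -> x l t = y l t) -> cube k N y.
Proof. by move=> h e l t ht; rewrite -e // h. Qed.

Lemma cube_agree d k N (x y : 'I_d -> G) : cube k N x -> cube k N y ->
  forall l t, (t < k)%N -> x l t = y l t.
Proof. by move=> h1 h2 l t ht; rewrite h1 // h2. Qed.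

Lemma cube_uniq d K N1 N2 (x y : 'I_d -> G) : cube K N1 x -> cube K N2 y ->
  (forall l t, (t < K)%N -> x l t = y l t) ->
  (forall l, N1 l < 2 ^ K)%N -> (forall l, N2 l < 2 ^ K)%N -> forall l, N1 l = N2 l.
Proof.
move=> h1 h2 e b1 b2 l; apply: (bits_eq (b1 l) (b2 l)) => j hj.
have ht : (K - 1 - j < K)%N by lia.
have := h1 l _ ht; have := h2 l _ ht; rewrite e //.
have -> : (K - 1 - (K - 1 - j) = j)%N by lia.
by move=> -> ->.
Qed.

Definition Cs d (p : forall s, {ffun 'I_d -> 'I_(2 ^ ms s)} -> {ffun 'I_d -> 'I_(2 ^ ms s)})
  s (x : 'I_d -> G) : Prop :=
    exists m m' : {ffun 'I_d -> 'I_(2 ^ ms s)},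
      cube (2 * ms s) (fun l => 2 ^ ms s * m l + m' l)%N x /\
      Rk (2 * ms s) x = Wk (ms s) (fun l => nat_of_ord (p s m l))
                                   (fun l => nat_of_ord (m' l)).

Lemma FgenE d p (x : 'I_d -> G) : Fgen p x <-> (forall s, (1 <= s)%N -> Cs p s x).
Proof. by []. Qed.

Lemma Cs_local d p s (x y : 'I_d -> G) :
  (forall l t, (t <= 2 * ms s)%N -> x l t = y l t) -> Cs p s x -> Cs p s y.
Proof.
move=> e [m [m' [hc hr]]]; exists m, m'; split.
  by apply: (cube_ext hc) => l t ht; apply: e; apply: ltnW.
rewrite -hr !Rk_bit; apply: eq_bigr => l _; by rewrite e.
Qed.

Definition flip d (l0 : 'I_d) (K : nat) (x : 'I_d -> G) : 'I_d -> G :=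
  fun l t => if (l == l0) && (t == K) then ~~ x l t else x l t.

Lemma Rk_flip d (l0 : 'I_d) K x : Rk K (flip l0 K x) = - Rk K x.
Proof.
rewrite !Rk_bit (bigD1 l0) // [in RHS](bigD1 l0) //= -mulNr; congr (_ * _).
  by rewrite /flip !eqxx /=; case: (x l0 K); rewrite ?expr0 ?expr1 ?opprK.
by apply: eq_bigr => l hl; rewrite /flip (negbTE hl).
Qed.

Lemma pm_ne (a b : rat) : ((a == 1) || (a == -1)) -> ((b == 1) || (b == -1)) ->
  a <> b -> - a = b.
Proof.
move=> /orP[] /eqP -> /orP[] /eqP -> //; rewrite ?opprK //.
Qed.

Lemma Cs_flip d (l0 : 'I_d) p s x : ~ Cs p s x -> Cs p s (flip l0 (2 * ms s) x).
Proof.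
move=> nC.
set N := fun l => num (2 * ms s) (x l).
have hN : forall l, (N l %/ 2 ^ ms s < 2 ^ ms s)%N.
  move=> l; rewrite ltn_divLR ?expn_gt0 // -expnD addnn -mul2n; exact: num_lt.
have hM : forall l, (N l %% 2 ^ ms s < 2 ^ ms s)%N.
  by move=> l; rewrite ltn_pmod ?expn_gt0.
pose m := [ffun l => Ordinal (hN l)].
pose m' := [ffun l => Ordinal (hM l)].
have hc : cube (2 * ms s) (fun l => 2 ^ ms s * m l + m' l)%N x.
  have -> : (fun l => 2 ^ ms s * m l + m' l)%N = N.
    apply: funext => l; rewrite !ffunE /= mulnC -divn_eq //.
  exact: cube_num.
exists m, m'; split.
  apply: (cube_ext hc) => l t ht; rewrite /flip.
  rewrite (_ : (t == 2 * ms s) = false) ?andbF //; apply/eqP; lia.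
rewrite Rk_flip; apply: pm_ne; [exact: Wd_pm | exact: Wd_pm | ].
by move=> e; apply: nC; exists m, m'.
Qed.

Lemma msS s : (1 <= s)%N -> ms s.+1 = (2 * (2 * ms s + 1))%N.
Proof. by case: s. Qed.

Lemma ms_ge s : (1 <= s)%N -> (s.-1 <= ms s)%N.
Proof.
elim: s => [|s IH] // _.
case: s IH => [|s] IH //.
rewrite msS //; have := IH isT; lia.
Qed.

Lemma ms_mono a b : (1 <= a)%N -> (a < b)%N -> (ms a < ms b)%N.
Proof.
move=> ha; elim: b => [|b IH] //.
rewrite ltnS leq_eqVlt => /orP[/eqP <-|hab].
  rewrite msS //; lia.
have := IH hab; rewrite msS; lia.
Qed.

Definition fixup d (l0 : 'I_d) p s (z : 'I_d -> G) : 'I_d -> G :=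
  if `[< Cs p s z >] then z else flip l0 (2 * ms s) z.

Fixpoint Zs d (l0 : 'I_d) p (y : 'I_d -> G) (s : nat) : 'I_d -> G :=
  match s with 0 => y | s'.+1 => fixup l0 p s'.+1 (Zs l0 p y s') end.

Lemma fixup_at d (l0 : 'I_d) p s z l t : t <> (2 * ms s)%N -> fixup l0 p s z l t = z l t.
Proof.
move=> ht; rewrite /fixup; case: asboolP => // _.
by rewrite /flip (_ : (t == 2 * ms s) = false) ?andbF //; apply/eqP.
Qed.

Lemma fixup_C d (l0 : 'I_d) p s z : Cs p s (fixup l0 p s z).
Proof.
rewrite /fixup; case: asboolP => // h; exact: Cs_flip.
Qed.

Lemma Zchange d (l0 : 'I_d) p y a b l t : (a <= b)%N ->
  (forall s', (a < s' <= b)%N -> t <> (2 * ms s')%N) ->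
  Zs l0 p y b l t = Zs l0 p y a l t.
Proof.
elim: b => [|b IH].
  by rewrite leqn0 => /eqP ->.
rewrite leq_eqVlt => /orP[/eqP ->|hab] // h.
rewrite /= fixup_at; last by apply: h; rewrite hab leqnn.
apply: IH => // s' /andP[h1 h2]; apply: h; rewrite h1 /=; lia.
Qed.

Definition xlim d (l0 : 'I_d) p y : 'I_d -> G := fun l t => Zs l0 p y t.+1 l t.

Lemma xlim_agree d (l0 : 'I_d) p y s : (1 <= s)%N ->
  forall l t, (t <= 2 * ms s)%N -> xlim l0 p y l t = Zs l0 p y s l t.
Proof.
move=> hs l t ht; rewrite /xlim.
have [h|h] := leqP t.+1 s.
  symmetry; apply: Zchange => // s' /andP[h1 h2].
  have h3 : (1 <= s')%N by lia.
  have := ms_ge h3; lia.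
apply: Zchange; first exact: ltnW.
move=> s' /andP[h1 h2].
have := ms_mono hs h1; lia.
Qed.

Lemma xlim_F d (l0 : 'I_d) p y : Fgen p (xlim l0 p y).
Proof.
move=> s hs.
apply: (@Cs_local _ _ _ (Zs l0 p y s)).
  by move=> l t ht; rewrite (xlim_agree _ _ _ hs).
case: s hs => [|s] // _; exact: fixup_C.
Qed.

Lemma Z_pre d (l0 : 'I_d) p y K :
  (forall s, (1 <= s)%N -> (2 * ms s < K)%N -> Cs p s y) ->
  forall s l t, (t < K)%N -> Zs l0 p y s l t = y l t.
Proof.
move=> hy; elim=> [|s IH] l t ht //=.
rewrite /fixup; case: asboolP => hC; first exact: IH.
have [hK|hK] := ltnP (2 * ms s.+1) K.
  exfalso; apply: hC; apply: (@Cs_local _ _ _ y); last exact: hy.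
  move=> l' t' ht'; rewrite IH //; lia.
rewrite /flip (_ : (t == 2 * ms s.+1) = false) ?andbF; first exact: IH.
apply/eqP; lia.
Qed.

Lemma ext_F d (l0 : 'I_d) (p : forall s, {ffun 'I_d -> 'I_(2 ^ ms s)} -> {ffun 'I_d -> 'I_(2 ^ ms s)}) y K :
  (forall s, (1 <= s)%N -> (2 * ms s < K)%N -> Cs p s y) ->
  exists x, Fgen p x /\ forall l t, (t < K)%N -> x l t = y l t.
Proof.
move=> hy; exists (xlim l0 p y); split; first exact: xlim_F.
move=> l t ht; rewrite /xlim; exact: (Z_pre l0 hy _ _ ht).
Qed.

Definition chi d (v sg : 'I_d -> bool) : rat := \prod_(l < d) (-1) ^+ (sg l && v l).
Definition child d (q : 'I_d -> nat) (sg : 'I_d -> bool) : 'I_d -> nat :=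
  fun l => ((q l).*2 + sg l)%N.

Lemma Rk_chi d k (x : 'I_d -> G) (sg : 'I_d -> bool) : (forall l, x l k = sg l) ->
  Rk k x = chi (fun _ => true) sg.
Proof. move=> h; rewrite Rk_bit /chi; apply: eq_bigr => l _; by rewrite h andbT. Qed.

Lemma meets_child_if d (l0 : 'I_d)
  (p : forall s, {ffun 'I_d -> 'I_(2 ^ ms s)} -> {ffun 'I_d -> 'I_(2 ^ ms s)})
  k q x0 (sg : 'I_d -> bool) :
  Fgen p x0 -> cube k q x0 ->
  (forall s, (1 <= s)%N -> (2 * ms s)%N = k -> chi (fun _ => true) sg = Rk k x0) ->
  meets (Fgen p) k.+1 (child q sg).
Proof.
move=> hF hc hpar.
pose y : 'I_d -> G := fun l t => if (t < k)%N then x0 l t else if t == k then sg l else false.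
have hy : forall s, (1 <= s)%N -> (2 * ms s < k.+1)%N -> Cs p s y.
  move=> s hs hk.
  have [hlt|hge] := ltnP (2 * ms s) k.
    apply: (@Cs_local _ _ _ x0); last exact: hF.
    by move=> l t ht; rewrite /y (_ : (t < k)%N = true) //; lia.
  have e : (2 * ms s)%N = k by lia.
  have [m [m' [hc' hr]]] := hF s hs.
  exists m, m'; split.
    apply: (cube_ext hc') => l t ht; rewrite /y (_ : (t < k)%N = true) //; lia.
  rewrite -hr e (@Rk_chi d k y sg); first exact: (hpar s hs e).
  by move=> l; rewrite /y ltnn eqxx.
have [x [hx hxy]] := ext_F l0 hy.
exists x; split => //.
apply/(cube_childP k q sg x); split.
  apply: (cube_ext hc) => l t ht; rewrite hxy; last by rewrite ltnS ltnW.
  by rewrite /y ht.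
by move=> l; rewrite hxy // /y ltnn eqxx.
Qed.

Lemma meets_child_onlyif d
  (p : forall s, {ffun 'I_d -> 'I_(2 ^ ms s)} -> {ffun 'I_d -> 'I_(2 ^ ms s)})
  k q x0 (sg : 'I_d -> bool) s :
  Fgen p x0 -> cube k q x0 -> (1 <= s)%N -> (2 * ms s)%N = k ->
  meets (Fgen p) k.+1 (child q sg) -> chi (fun _ => true) sg = Rk k x0.
Proof.
move=> hF hc hs e [x [hx hcx]].
have [hcx1 hcx2] := proj1 (cube_childP k q sg x) hcx.
rewrite -(Rk_chi hcx2).
have ag := cube_agree hcx1 hc.
have [m1 [m1' [c1 r1]]] := hx s hs.
have [m2 [m2' [c2 r2]]] := hF s hs.
have bnd : forall (m m' : {ffun 'I_d -> 'I_(2 ^ ms s)}) l,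
    (2 ^ ms s * m l + m' l < 2 ^ (2 * ms s))%N.
  move=> m m' l; rewrite mul2n -addnn expnD.
  have := ltn_ord (m l); have := ltn_ord (m' l).
  move: (2 ^ ms s)%N (nat_of_ord (m l)) (nat_of_ord (m' l)) => P a b; nia.
have eqN := cube_uniq c1 c2 (fun l t ht => ag l t (ltac:(lia))) (bnd m1 m1') (bnd m2 m2').
have em : m1 = m2.
  apply/ffunP => l; apply: val_inj => /=.
  have := eqN l; have := ltn_ord (m1' l); have := ltn_ord (m2' l).
  move: (2 ^ ms s)%N (nat_of_ord (m1 l)) (nat_of_ord (m2 l)) (nat_of_ord (m1' l)) (nat_of_ord (m2' l)) => P a b a' b'; nia.
have em' : m1' = m2'.
  apply/ffunP => l; apply: val_inj => /=.
  have := eqN l; rewrite em; lia.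
by rewrite -e r1 r2 em em'.
Qed.

Definition cnt d (E : ('I_d -> G) -> Prop) k (q : 'I_d -> nat) : nat :=
  #|[pred sg : {ffun 'I_d -> bool} | `[< meets E k.+1 (child q sg) >] ]|.

Lemma tauE_S d (E : ('I_d -> G) -> Prop) k m :
  tauE E k.+1 m = if `[< meets E k.+1 m >] then
     tauE E k (fun l => (m l)./2) / (cnt E k (fun l => (m l)./2))%:R else 0.
Proof. by []. Qed.

Lemma tau_nmeets d (E : ('I_d -> G) -> Prop) k m : ~ meets E k m -> tauE E k m = 0.
Proof. by case: k => [|k] h /=; case: asboolP. Qed.

Lemma meets_cnt d (E : ('I_d -> G) -> Prop) k q : meets E k q -> (0 < cnt E k q)%N.
Proof.
move=> [x [hx hc]].
apply/card_gt0P; exists [ffun l => x l k]; rewrite inE; apply/asboolP.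
exists x; split => //; apply/(cube_childP k q [ffun l => x l k] x); split => //.
by move=> l; rewrite ffunE.
Qed.

Lemma cube_pt_child d k q (sg : 'I_d -> bool) l :
  cube_pt k.+1 (child q sg) l = fun j => if j == k then sg l else cube_pt k q l j.
Proof.
apply: funext => j; rewrite /cube_pt /child.
case: (ltngtP j k) => h.
- rewrite (_ : (j < k.+1)%N = true) ?h /=; last by lia.
  have -> : (k.+1 - 1 - j = (k - 1 - j).+1)%N by lia.
  by rewrite bitS.
- rewrite (_ : (j < k.+1)%N = false) //; lia.
- by rewrite h ltnSn subn1 /= subnn bit0.
Qed.

Lemma W_upd n g k (b : bool) : g k = false ->
  W n (fun j => if j == k then b else g j) = W n g * (-1) ^+ (b && bit n k).
Proof.
move=> hg.
have [hk|hk] := ltnP k n.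
  rewrite /W (bigD1 (Ordinal hk)) //= [in RHS](bigD1 (Ordinal hk)) //= eqxx hg /=.
  rewrite exprD add0n mulrC; congr (_ * _); congr (_ ^+ _); apply: eq_bigr => j hj.
  by rewrite (_ : (nat_of_ord j == k) = false) //; apply/negbTE; move: hj; apply: contra => /eqP e; apply/eqP/val_inj.
rewrite bit_small; last first.
  apply: (leq_trans (ltn_expl n (isT : (1 < 2)%N))); by rewrite leq_exp2l.
rewrite andbF expr0 mulr1 /W; congr (_ ^+ _); apply: eq_bigr => j _.
by rewrite (_ : (nat_of_ord j == k) = false) //; apply/eqP => e; move: (ltn_ord j); rewrite e; lia.
Qed.

Lemma Wk_child d k (n q : 'I_d -> nat) (sg : 'I_d -> bool) :
  Wk k.+1 n (child q sg) = Wk k n q * chi (fun l => bit (n l) k) sg.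
Proof.
rewrite /Wk /Wd /chi -big_split /=; apply: eq_bigr => l _.
rewrite cube_pt_child W_upd //.
by rewrite /cube_pt ltnn.
Qed.

Lemma tauE_child d (E : ('I_d -> G) -> Prop) k q (sg : 'I_d -> bool) :
  tauE E k.+1 (child q sg) = if `[< meets E k.+1 (child q sg) >] then
     tauE E k q / (cnt E k q)%:R else 0.
Proof.
rewrite tauE_S; have -> // : (fun l => (child q sg l)./2) = q.
by apply: funext => l; rewrite /child addnC half_bit_double.
Qed.

Lemma lt_child k (a : nat) (b : bool) : (a < 2 ^ k)%N -> (a.*2 + b < 2 ^ k.+1)%N.
Proof. rewrite expnS; case: b => /=; lia. Qed.

Lemma half_lt k (a : nat) : (a < 2 ^ k.+1)%N -> (a./2 < 2 ^ k)%N.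
Proof. rewrite expnS -divn2 ltn_divLR // mulnC //. Qed.

Definition joinm d k (p : {ffun 'I_d -> 'I_(2 ^ k)}) (sg : {ffun 'I_d -> bool}) :
  {ffun 'I_d -> 'I_(2 ^ k.+1)} := [ffun l => Ordinal (lt_child (sg l) (ltn_ord (p l)))].

Definition splitm d k (m : {ffun 'I_d -> 'I_(2 ^ k.+1)}) :
  {ffun 'I_d -> 'I_(2 ^ k)} * {ffun 'I_d -> bool} :=
  ([ffun l => Ordinal (half_lt (ltn_ord (m l)))], [ffun l => odd (m l)]).

Definition pn d k (p : {ffun 'I_d -> 'I_(2 ^ k)}) : 'I_d -> nat := fun l => nat_of_ord (p l).

Lemma fcoef_S d (E : ('I_d -> G) -> Prop) k n :
  fcoef (tauE E) k.+1 n =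
  \sum_(p : {ffun 'I_d -> 'I_(2 ^ k)})
     Wk k n (pn p) * (tauE E k (pn p) / (cnt E k (pn p))%:R) *
     \sum_(sg : {ffun 'I_d -> bool} | `[< meets E k.+1 (child (pn p) sg) >]) chi (fun l => bit (n l) k) sg.
Proof.
rewrite /fcoef (reindex (fun u => joinm u.1 u.2)) /=; last first.
  apply: onW_bij; exists (@splitm d k).
  - move=> [p sg]; rewrite /splitm /joinm /=; congr (_, _); apply/ffunP => l; rewrite !ffunE /=.
      by apply: val_inj => /=; rewrite addnC half_bit_double.
    by rewrite oddD odd_double /=; case: (sg l).
  - move=> m; rewrite /splitm /joinm /=; apply/ffunP => l; rewrite !ffunE; apply: val_inj => /=.
    by rewrite addnC odd_double_half.
rewrite -(pair_bigA _ (fun p sg => Wk k.+1 n (fun l => nat_of_ord (joinm p sg l)) *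
   tauE E k.+1 (fun l => nat_of_ord (joinm p sg l)))).
apply: eq_bigr => p _.
have ej : forall sg, (fun l => nat_of_ord (joinm p sg l)) = child (pn p) sg.
  by move=> sg; apply: funext => l; rewrite /joinm ffunE.
have eh : forall sg, (fun l => (child (pn p) sg l)./2) = pn p.
  by move=> sg; apply: funext => l; rewrite /child addnC half_bit_double.
rewrite mulr_sumr [in RHS]big_mkcond; apply eq_bigr; intros sg _.
rewrite ej Wk_child tauE_child.
case: asboolP => _; last by rewrite !mulr0.
by rewrite mulrAC -mulrA [_ * chi _ _]mulrC mulrA.
Qed.

Lemma fcoef_cons d (E : ('I_d -> G) -> Prop) k n : (forall l, n l < 2 ^ k)%N ->
  fcoef (tauE E) k.+1 n = fcoef (tauE E) k n.
Proof.
move=> hn; rewrite fcoef_S /fcoef; apply: eq_bigr => p _.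
have hv : forall sg, chi (fun l => bit (n l) k) sg = 1.
  by move=> sg; rewrite /chi big1 // => l _; rewrite bit_small // andbF.
rewrite (eq_bigr (fun _ => 1)); last by move=> sg _; rewrite hv.
have -> : \sum_(sg : {ffun 'I_d -> bool} | `[< meets E k.+1 (child (pn p) sg) >]) (1 : rat)
   = (cnt E k (pn p))%:R.
  by rewrite /cnt -sum1_card natr_sum; apply: eq_bigl => sg; rewrite inE.
have [hc|hc] := posnP (cnt E k (pn p)).
  rewrite tau_nmeets; first by rewrite !(mul0r, mulr0).
  by move=> /meets_cnt; rewrite hc.
by rewrite -mulrA divfK // pnatr_eq0 -lt0n.
Qed.

Lemma fcoef_zero d (E : ('I_d -> G) -> Prop) k n :
  (forall p : {ffun 'I_d -> 'I_(2 ^ k)}, meets E k (pn p) ->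
     \sum_(sg : {ffun 'I_d -> bool} | `[< meets E k.+1 (child (pn p) sg) >])
        chi (fun l => bit (n l) k) sg = 0) ->
  fcoef (tauE E) k.+1 n = 0.
Proof.
move=> h; rewrite fcoef_S big1 // => p _.
case: (asboolP (meets E k (pn p))) => hm.
  by rewrite h // mulr0.
by rewrite tau_nmeets // mul0r mulr0 mul0r.
Qed.

Lemma sum_invol (T : finType) (P : pred T) (f : T -> rat) (phi : T -> T) :
  involutive phi -> (forall x, P (phi x) = P x) -> (forall x, f (phi x) = - f x) ->
  \sum_(x | P x) f x = 0.
Proof.
move=> hi hP hf.
have := reindex_inj (op := +%R) (x := 0) (P := P) (F := f) (inv_inj hi).
under [X in _ = X -> _]eq_bigl => x do rewrite hP.
under [X in _ = X -> _]eq_bigr => x _ do rewrite hf.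
rewrite sumrN => e; lra.
Qed.

Definition flips d (i i' : 'I_d) (sg : {ffun 'I_d -> bool}) : {ffun 'I_d -> bool} :=
  [ffun l => sg l (+) ((l == i) || (l == i'))].

Lemma flips_inv d (i i' : 'I_d) : involutive (flips i i').
Proof. by move=> sg; apply/ffunP => l; rewrite !ffunE addbK. Qed.

Lemma chi_flips d (w : 'I_d -> bool) i i' sg :
  chi w (flips i i' sg) = chi w sg * \prod_(l < d) (-1) ^+ (((l == i) || (l == i')) && w l).
Proof.
rewrite /chi -big_split /=; apply: eq_bigr => l _; rewrite ffunE.
case: (sg l); case: ((l == i) || (l == i')); case: (w l);
  by rewrite /= ?expr0 ?expr1 ?mulr1 ?mul1r ?mulrNN ?mulN1r ?opprK.
Qed.

Lemma prod1 d (w : 'I_d -> bool) i :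
  \prod_(l < d) (-1) ^+ (((l == i) || (l == i)) && w l) = (-1) ^+ w i :> rat.
Proof.
rewrite (bigD1 i) //=.
rewrite big1 ?mulr1 ?eqxx // => l /negbTE ->; by [].
Qed.

Lemma prod2 d (w : 'I_d -> bool) i i' : i != i' ->
  \prod_(l < d) (-1) ^+ (((l == i) || (l == i')) && w l) = (-1) ^+ w i * (-1) ^+ w i' :> rat.
Proof.
move=> hii.
rewrite (bigD1 i) //=.
rewrite (bigD1 i') //=.
rewrite big1 ?mulr1 ?eqxx ?orbT //.
  by move=> l /andP[/negbTE -> /negbTE ->].
by rewrite eq_sym.
Qed.

Lemma sum_chi_all d (v : 'I_d -> bool) i : v i ->
  \sum_(sg : {ffun 'I_d -> bool}) chi v sg = 0.
Proof.
move=> hv; apply: (sum_invol (phi := flips i i)) => //; first exact: flips_inv.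
by move=> sg; rewrite chi_flips prod1 hv expr1 mulrN1.
Qed.

Lemma sum_chi_par d (v : 'I_d -> bool) i i' (r : rat) : v i -> ~~ v i' ->
  \sum_(sg : {ffun 'I_d -> bool} | chi (fun _ => true) sg == r) chi v sg = 0.
Proof.
move=> hv hv'.
have hii : i != i' by apply/eqP => e; move: hv hv'; rewrite e => ->.
apply: (sum_invol (phi := flips i i')); first exact: flips_inv.
  by move=> sg; rewrite chi_flips prod2 // expr1 mulrNN mulr1.
by move=> sg; rewrite chi_flips prod2 // hv (negbTE hv') expr1 expr0 mulr1 mulrN1.
Qed.

Lemma main_gen d (hd : (2 <= d)%N)
  (p : forall s, {ffun 'I_d -> 'I_(2 ^ ms s)} -> {ffun 'I_d -> 'I_(2 ^ ms s)}) :
  (forall k : nat, fcoef (tauE (Fgen p)) k (fun _ => 0%N) = 1%R) /\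
  (forall n : 'I_d -> nat,
      (exists l, n l <> 0%N) ->
      (forall s : nat, (1 <= s)%N -> ~ inB (2 * ms s) n) ->
      forall k : nat, (forall l, n l < 2 ^ k)%N ->
        fcoef (tauE (Fgen p)) k n = 0%R).
Proof.
have hd0 : (0 < d)%N by lia.
pose l0 : 'I_d := Ordinal hd0.
split.
  elim=> [|k IH]; first last.
    by rewrite fcoef_cons // => l; rewrite expn_gt0.
  have [x0 [hx0 _]] := ext_F l0 (p := p) (y := fun _ _ => false) (K := 0) (fun s _ h => ltac:(done)).
  rewrite /fcoef (eq_bigr (fun _ => 1)).
    by rewrite sumr_const card_ffun card_ord exp1n.
  move=> m _; rewrite /Wk /Wd big1 ?mul1r.
    rewrite /=; case: asboolP => // h; exfalso; apply: h.
    by exists x0; split => // l t.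
  by move=> l _; rewrite /W big_ord0.
move=> n [l1 hl1] hB; elim=> [|k IH] hn.
  by exfalso; apply: hl1; have := hn l1; rewrite expn0; lia.
have [hall|hnall] := boolP [forall l, n l < 2 ^ k]%N.
  rewrite fcoef_cons; last by move=> l; exact: (forallP hall l).
  by apply: IH => l; exact: (forallP hall l).
move: hnall; rewrite negb_forall => /existsP[i hi].
have hvi : bit (n i) k by apply: bit_top; rewrite leqNgt hi hn.
apply: fcoef_zero => q [x0 [hx0 hc0]].
case: (pselect (exists s, (1 <= s)%N /\ (2 * ms s)%N = k)) => [[s [hs e]]|hno].
  have [i' /negP hi'] : exists i', ~ bit (n i') k.
    apply/existsNP => hall; apply: (hB s hs); rewrite e /inB => l.
    apply/andP; split; last exact: hn l.
    case: (leqP (2 ^ k) (n l)) => // h; exfalso.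
    by have := hall l; rewrite bit_small.
  rewrite (eq_bigl (fun sg : {ffun 'I_d -> bool} => chi (fun _ => true) sg == Rk k x0)).
    exact: (sum_chi_par _ hvi hi').
  move=> sg; apply/asboolP/eqP.
    exact: (meets_child_onlyif hx0 hc0 hs e).
  move=> hpar; apply: (meets_child_if l0 hx0 hc0) => s' _ _; exact: hpar.
rewrite (eq_bigl (fun _ : {ffun 'I_d -> bool} => true)); first exact: (sum_chi_all hvi).
move=> sg; apply/asboolP; apply: (meets_child_if l0 hx0 hc0) => s' hs' e'.
by exfalso; apply: hno; exists s'.
Qed.

Local Close Scope ring_scope.
Unset Implicit Arguments.

Theorem lemma3 (d : nat) (hd : (2 <= d)%N) :
  ((forall k : nat, fcoef (tauE (@Fset d)) k (fun _ => 0%N) = 1%R) /\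
   (forall n : 'I_d -> nat,
      (exists l, n l <> 0%N) ->
      (forall s : nat, (1 <= s)%N -> ~ inB (2 * ms s) n) ->
      forall k : nat, (forall l, n l < 2 ^ k)%N ->
        fcoef (tauE (@Fset d)) k n = 0%R))
  /\
  (forall pi : (forall s : nat, {perm {ffun 'I_d -> 'I_(2 ^ ms s)}}),
     (forall k : nat, fcoef (tauE (Fpi pi)) k (fun _ => 0%N) = 1%R) /\
     (forall n : 'I_d -> nat,
        (exists l, n l <> 0%N) ->
        (forall s : nat, (1 <= s)%N -> ~ inB (2 * ms s) n) ->
        forall k : nat, (forall l, n l < 2 ^ k)%N ->
          fcoef (tauE (Fpi pi)) k n = 0%R)).
Proof.
split; first exact: (main_gen hd (fun s m => m)).
move=> pi; exact: (main_gen hd (fun s => pi s)).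
Qed.
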